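(* Let $\hat H,\hat H'$ be $p\times p$ transfer functions. Then $\hat H\sim\hat H'$ (shift equivalence) if and only if all of the following hold: (1) $\hat H_{ii}=\hat H'_{ii}$ for all $i$; (2) for all $i\neq j$, $\hat H_{ij}=0$ if and only if $\hat H'_{ij}=0$; (3) for all $i\ne j$ with $\hat H_{ij}\neq0$ there is an integer $b_{ij}$ with $\hat H'_{ij}(z)/\hat H_{ij}(z)=z^{b_{ij}}$; (4) the linear system $b_{ij}=m_j-m_i$ for all $i\neq j$ with $\hat H_{ij}\ne0$ has a solution $m\in\mathbb{R}^p$. Moreover, whenever this system has a real solution it has an integer solution.
   Context: For nonnegative integers $m=(m_1,\dots,m_p)$, the multi-shift is $\hat\Delta_m(z)=\mathrm{diag}(z^{-m_1},\dots,z^{-m_p})$. Two $p\times p$ transfer functions (matrices of rational functions of $z$) are shift-equivalent, $\hat H_1\sim\hat H_2$, if there is a multi-shift $\hat\Delta_m$ with $\hat H_1=\hat\Delta_m\hat H_2\hat\Delta_m^{-1}$. *)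

(* Defs.v *)
From HB Require Import structures.
From mathcomp Require Import all_boot all_order all_algebra fraction.
From mathcomp Require Import Rstruct.
Set Implicit Arguments. Unset Strict Implicit. Unset Printing Implicit Defensive.
Import Order.TTheory GRing.Theory Num.Theory.
Local Open Scope ring_scope.

Definition ratfun (F : fieldType) := {fraction {poly F}}.

Definition zvar (F : fieldType) : ratfun F := tofrac 'X.

Definition transfer (F : fieldType) (p : nat) := 'M[ratfun F]_p.

Definition multishift (F : fieldType) (p : nat) (m : 'I_p -> nat) : transfer F p :=
  diag_mx (\row_i (zvar F ^ (- (m i)%:Z))).

Definition shift_equiv (F : fieldType) (p : nat) (H1 H2 : transfer F p) : Prop :=
  exists m : 'I_p -> nat,
    H1 = @multishift F p m *m H2 *m invmx (@multishift F p m).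

(* Main.v *)
Require Import Defs.
From HB Require Import structures.
From mathcomp Require Import all_boot all_order all_algebra fraction.
From mathcomp Require Import Rstruct.
From mathcomp Require Import ring.
Import Order.TTheory GRing.Theory Num.Theory.
Local Open Scope ring_scope.
Lemma zvar_neq0 (F : fieldType) : zvar F != 0.
Proof. by rewrite /zvar tofrac_eq0 polyX_eq0. Qed.

Lemma conj_entry (F : fieldType) (p : nat) (m : 'I_p -> nat) (A : transfer F p) i j :
  (@multishift F p m *m A *m invmx (@multishift F p m)) i j
  = zvar F ^ ((m j)%:Z - (m i)%:Z) * A i j.
Proof.
have z0 := zvar_neq0 F.
set E : transfer F p := diag_mx (\row_i (zvar F ^ (m i)%:Z)).
have DE : @multishift F p m *m E = 1%:M.
  rewrite /multishift /E mulmx_diag -diag_const_mx; congr diag_mx.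
  by apply/rowP => k; rewrite !mxE -expfzDr // addNr.
have ED : E *m @multishift F p m = 1%:M.
  rewrite /multishift /E mulmx_diag -diag_const_mx; congr diag_mx.
  by apply/rowP => k; rewrite !mxE -expfzDr // addrN.
have U : @multishift F p m \in unitmx by apply: (@intro_unitmx _ _ _ E).
have -> : invmx (@multishift F p m) = E.
  by rewrite -[RHS](mulKmx U) DE mulmx1.
rewrite /multishift /E mul_mx_diag mul_diag_mx !mxE.
by rewrite mulrC mulrA -expfzDr // addrC.
Qed.

Lemma floor_sol (p : nat) (b : 'I_p -> 'I_p -> int) (m : 'I_p -> Rdefinitions.R) P :
  (forall i j : 'I_p, P i j -> (b i j)%:~R = m j - m i) ->
  forall i j, P i j -> b i j = Num.floor (m j) - Num.floor (m i).
Proof.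
move=> h i j /h e.
have -> : m j = m i + (b i j)%:~R by rewrite e addrC subrK.
by rewrite floorDrz ?intr_int // intrKfloor addrC addKr.
Qed.

Theorem mainTheorem12 (F : fieldType) (p : nat) (H H' : transfer F p) :
  (shift_equiv H H' <->
    [/\ (forall i : 'I_p, H i i = H' i i),
        (forall i j : 'I_p, i != j -> (H i j == 0) = (H' i j == 0)) &
        exists b : 'I_p -> 'I_p -> int,
          (forall i j : 'I_p, i != j -> H i j != 0 ->
              H' i j / H i j = zvar F ^ b i j) /\
          (exists m : 'I_p -> Rdefinitions.R,
              forall i j : 'I_p, i != j -> H i j != 0 ->
                (b i j)%:~R = m j - m i)])
  /\
  (forall b : 'I_p -> 'I_p -> int,
     (forall i j : 'I_p, i != j -> H i j != 0 ->
        H' i j / H i j = zvar F ^ b i j) ->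
     (exists m : 'I_p -> Rdefinitions.R,
        forall i j : 'I_p, i != j -> H i j != 0 -> (b i j)%:~R = m j - m i) ->
     exists m : 'I_p -> int,
        forall i j : 'I_p, i != j -> H i j != 0 -> b i j = m j - m i).
Proof.
have z0 := zvar_neq0 F.
have part2 : forall b : 'I_p -> 'I_p -> int,
     (exists m : 'I_p -> Rdefinitions.R,
        forall i j : 'I_p, i != j -> H i j != 0 -> (b i j)%:~R = m j - m i) ->
     exists m : 'I_p -> int,
        forall i j : 'I_p, i != j -> H i j != 0 -> b i j = m j - m i.
  move=> b [m hm]; exists (fun i => Num.floor (m i)) => i j ij hij.
  have := @floor_sol p b m (fun i j => (i != j) && (H i j != 0)).
  apply => [i' j' /andP[] | ]; [exact: hm | by rewrite ij hij].
split; last by move=> b _; exact: part2.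
split.
- move=> [m hm].
  have hE i j : H i j = zvar F ^ ((m j)%:Z - (m i)%:Z) * H' i j by rewrite hm conj_entry.
  split.
  + by move=> i; rewrite hE subrr expr0z mul1r.
  + by move=> i j _; rewrite hE mulf_eq0 (negPf (expfz_neq0 _ z0)).
  + exists (fun i j => (m i)%:Z - (m j)%:Z); split.
      move=> i j _ hij; rewrite hE.
      have h' : H' i j != 0 by move: hij; rewrite hE mulf_eq0 negb_or => /andP[].
      rewrite invfM mulrCA mulfV // mulr1 invr_expz opprB //.
    exists (fun i => - ((m i)%:R : Rdefinitions.R)) => i j _ _.
    by rewrite intrB opprK addrC.
- move=> [hd hz [b [hb hm]]].
  have [mm hmm] := part2 b hm.
  pose c : int := \sum_k `|mm k|%:Z.
  have hc k : 0 <= c - mm k.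
    rewrite subr_ge0 /c (bigD1 k) //= -[mm k]addr0 lerD //.
      by rewrite addr0 abszE ler_norm.
    by rewrite sumr_ge0.
  pose n k := `|c - mm k|%N.
  have hn k : (n k)%:Z = c - mm k by rewrite /n abszE ger0_norm.
  exists n; apply/matrixP => i j; rewrite conj_entry !hn.
  have -> : c - mm j - (c - mm i) = mm i - mm j.
    by ring.
  have [<-|ij] := eqVneq i j; first by rewrite subrr expr0z mul1r hd.
  have [Hz|Hnz] := eqVneq (H i j) 0.
    by rewrite Hz; move: (hz i j ij); rewrite Hz eqxx => /esym/eqP ->; rewrite mulr0.
  have e := hb i j ij Hnz.
  have -> : H' i j = zvar F ^ b i j * H i j by rewrite -e mulfVK.
  rewrite mulrA -expfzDr //.
  have -> : mm i - mm j + b i j = 0 by rewrite (hmm i j ij Hnz); ring.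
  by rewrite expr0z mul1r.
Qed.
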